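(* Let $g\ge2$. The subset of $\overline{\mathcal{M}}_g$ consisting of stable curves whose dual graph admits a $\mathbb{Z}$-emm (respectively, an $\mathbb{R}$-emm) is an open union of strata of $\overline{\mathcal{M}}_g$.
   Context: $\overline{\mathcal{M}}_g$ is the Deligne–Mumford compactification, stratified by dual graphs of stable curves (vertices = components, edges = nodes). For a finite graph $G$ with oriented edges $e_i$, $H_1(G,\mathbb{Z})$ is the cycle group, $H^1(G,\mathbb{Z})$ its dual, and the image of $e_i^*$ in $H^1$ is the coedge $e_i^*$. For $R\in\{\mathbb{Z},\mathbb{R}\}$, an $R$-emm is $q\in\mathrm{Sym}^2H_1(G,R)$, viewed as a quadratic form on $H^1(G,\mathbb{R})$, that is positive definite, satisfies $q(e_i^* )=1$ for each non-bridge edge $e_i$, and $q(v)\ge1$ for all $v\in H^1(G,\mathbb{Z})\setminus0$. *)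

(* Defs.v *)
From HB Require Import structures.
From mathcomp Require Import all_boot all_order all_algebra.
From mathcomp Require Import reals.
Set Implicit Arguments. Unset Strict Implicit. Unset Printing Implicit Defensive.
Import Order.TTheory GRing.Theory Num.Theory.
Local Open Scope ring_scope.

(* A finite (multi)graph with loops allowed, oriented edges, and vertex
   genus weights (the dual graph of a stable curve: vertices = components,
   weight = geometric genus of the normalization of the component,
   edges = nodes). *)
Record graph := Graph {
  gV : finType;
  gE : finType;
  src : gE -> gV;
  tgt : gE -> gV;
  wt : gV -> nat }.

Definition joins (G : graph) (e : gE G) (u v : gV G) : bool :=
  ((src e == u) && (tgt e == v)) || ((src e == v) && (tgt e == u)).

Arguments joins : clear implicits.
Arguments joins {G}.
Definition adj_in (G : graph) (S : pred (gE G)) : rel (gV G) :=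
  fun u v => [exists e : gE G, S e && joins e u v].

Definition connected_graph (G : graph) : Prop :=
  forall u v : gV G, connect (@adj_in G predT) u v.

Definition bridge (G : graph) (e : gE G) : bool :=
  ~~ connect (@adj_in G (predC1 e)) (src e) (tgt e).

Definition valence (G : graph) (v : gV G) : nat :=
  #|[pred e : gE G | src e == v]| + #|[pred e : gE G | tgt e == v]|.

(* stable graph of genus g:  g = b_1(G) + sum of weights,
   b_1 = #E - #V + 1 for a connected graph *)
Definition stable_graph (g : nat) (G : graph) : Prop :=
  [/\ (0 < #|gV G|)%N, connected_graph G,
      (forall v : gV G, 3 <= 2 * wt v + valence v)%N &
      (#|gE G| + \sum_(v : gV G) wt v + 1 = g + #|gV G|)%N].

(* H is (isomorphic to) the contraction G/S of G along a set S of edges: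
   vertices of H = connected components of (V G, S), edges of H = edges
   of G outside S, weights of H = sum of weights of the component plus the
   first Betti number of the component.  In M_g-bar, the stratum of G lies
   in the closure of the stratum of H iff H is such a contraction of G. *)
Definition contraction (G H : graph) : Prop :=
  exists (S : pred (gE G)) (phiV : gV G -> gV H) (phiE : gE G -> gE H),
  [/\ forall u : gV H, exists v, phiV v = u,
      forall v v' : gV G, phiV v = phiV v' <-> connect (@adj_in G S) v v',
      forall e e' : gE G, ~~ S e -> ~~ S e' -> phiE e = phiE e' -> e = e',
      forall f : gE H, exists2 e, ~~ S e & phiE e = f &
      forall e : gE G, ~~ S e -> joins (phiE e) (phiV (src e)) (phiV (tgt e))]
  /\ (forall u : gV H,
        (wt u + #|[pred v | phiV v == u]| =
         \sum_(v | phiV v == u) wt v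
         + #|[pred e | S e && (phiV (src e) == u)]| + 1)%N).

Section Forms.
Variables (R : realType) (G : graph).

(* coboundary  delta : R^V -> R^E  (its image is the kernel of R^E -> H^1) *)
Definition cobound (y : gV G -> R) : gE G -> R := fun e => y (tgt e) - y (src e).

(* q in Sym^2 R^E, given by a symmetric matrix Q, as a quadratic form on R^E *)
Definition qf (Q : gE G -> gE G -> R) (x : gE G -> R) : R :=
  \sum_(e : gE G) \sum_(f : gE G) Q e f * x e * x f.

(* indicator of an edge: a representative of the coedge e^* *)
Definition coedge (e : gE G) : gE G -> R := fun f => (f == e)%:R.

Definition intvec (x : gE G -> int) : gE G -> R := fun e => (x e)%:~R.

(* q is an R-emm:
   - q in Sym^2 H_1(G,R): Q symmetric and q descends to H^1 = R^E / im delta;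
   - positive definite on H^1(G,R);
   - q(e^* ) = 1 for every non-bridge edge e;
   - q(v) >= 1 for every nonzero v in H^1(G,Z) = Z^E / delta(Z^V). *)
Definition is_emmR (Q : gE G -> gE G -> R) : Prop :=
  [/\ forall e f, Q e f = Q f e,
      forall (x : gE G -> R) (y : gV G -> R),
        qf Q (fun e => x e + cobound y e) = qf Q x,
      forall x : gE G -> R, (forall y : gV G -> R, x <> cobound y) -> 0 < qf Q x,
      forall e : gE G, ~~ bridge e -> qf Q (coedge e) = 1 &
      forall x : gE G -> int,
        (forall y : gV G -> int, x <> (fun e => y (tgt e) - y (src e))) ->
        1 <= qf Q (intvec x)].

(* Z-emm: additionally q in Sym^2 H_1(G,Z), i.e. q is integer-valued on
   H^1(G,Z) (Sym^2 of a lattice = integer-valued quadratic forms on the dual) *)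
Definition is_emmZ (Q : gE G -> gE G -> R) : Prop :=
  is_emmR Q /\ forall x : gE G -> int, qf Q (intvec x) \is a Num.int.

Definition has_Remm : Prop := exists Q, is_emmR Q.
Definition has_Zemm : Prop := exists Q, is_emmZ Q.

End Forms.

(* Main.v *)
Require Import Defs.
From HB Require Import structures.
From mathcomp Require Import all_boot all_order all_algebra.
From mathcomp Require Import reals.
From mathcomp Require Import ring.
From Stdlib Require Import FunctionalExtensionality.
Set Implicit Arguments. Unset Strict Implicit. Unset Printing Implicit Defensive.
Import Order.TTheory GRing.Theory Num.Theory.
Local Open Scope ring_scope.

Section Contr.
Variables (G H : graph) (S : pred (gE G)) (phiV : gV G -> gV H)
  (phiE : gE G -> gE H) (lift : gE H -> gE G) (rep : gV H -> gV G).
Hypotheses (hV : forall v v', phiV v = phiV v' <-> connect (@adj_in G S) v v')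
 (hinj : forall e e', ~~ S e -> ~~ S e' -> phiE e = phiE e' -> e = e')
 (hjoin : forall e, ~~ S e -> joins (phiE e) (phiV (src e)) (phiV (tgt e)))
 (hlift : forall f, ~~ S (lift f) /\ phiE (lift f) = f)
 (hrep : forall u, phiV (rep u) = u).

Lemma lift_phiE e : ~~ S e -> lift (phiE e) = e.
Proof. move=> Se; apply: hinj => //; [exact: (hlift _).1 | exact: (hlift _).2]. Qed.

Definition sg (K : ringType) f : K :=
  if phiV (src (lift f)) == src f then 1 else -1.

Lemma sg2 (K : ringType) f : sg K f * sg K f = 1.
Proof. by rewrite /sg; case: ifP => _; rewrite ?mulr1 ?mulrNN ?mulr1. Qed.

Lemma orient f : phiV (src (lift f)) == src f ->
  phiV (src (lift f)) = src f /\ phiV (tgt (lift f)) = tgt f.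
Proof.
have := hjoin (hlift f).1; rewrite (hlift f).2 /joins.
by case/orP=> /andP[/eqP a /eqP b] /eqP c; split; congruence.
Qed.

Lemma orient' f : phiV (src (lift f)) != src f ->
  phiV (src (lift f)) = tgt f /\ phiV (tgt (lift f)) = src f.
Proof.
have := hjoin (hlift f).1; rewrite (hlift f).2 /joins.
case/orP=> /andP[/eqP a /eqP b] c; last by split; congruence.
by rewrite a eqxx in c.
Qed.

Definition ext (K : ringType) (x : gE H -> K) e : K :=
  if S e then 0 else sg K (phiE e) * x (phiE e).

Lemma ext_lift (K : ringType) (x : gE H -> K) f : ext x (lift f) = sg K f * x f.
Proof. by rewrite /ext (negbTE (hlift f).1) (hlift f).2. Qed.

Lemma const_conn (T : Type) (y : gV G -> T) :
  (forall e, S e -> y (src e) = y (tgt e)) ->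
  forall v v', connect (@adj_in G S) v v' -> y v = y v'.
Proof.
move=> hy v v' /connectP[p]; elim: p v => [|w p IH] v /=; first by move=> _ ->.
case/andP => /existsP[e /andP[Se j]] hp hl; rewrite -(IH w hp hl).
move: j; rewrite /joins; case/orP=> /andP[/eqP a /eqP b]; rewrite -a -b.
  exact: hy.
by rewrite hy.
Qed.

Lemma lift_cob (K : comRingType) (x : gE H -> K) (y : gV G -> K) :
  (forall e, ext x e = y (tgt e) - y (src e)) ->
  forall f, x f = y (rep (tgt f)) - y (rep (src f)).
Proof.
move=> hx.
have yc v : y v = y (rep (phiV v)).
  apply: (@const_conn _ y); last by apply/hV; rewrite hrep.
  move=> e Se; have := hx e; rewrite /ext Se => /eqP; rewrite eq_sym subr_eq0.
  by move/eqP.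
move=> f; have h := hx (lift f); rewrite ext_lift in h.
rewrite [y (tgt _)]yc [y (src _)]yc in h.
move: h; rewrite /sg; case: ifP => c.
  by have [-> ->] := orient c; rewrite mul1r.
have [-> ->] := orient' (negbT c); move=> h.
apply: oppr_inj; rewrite -mulN1r h opprB //.
Qed.

Lemma ext_add (K : comRingType) (x : gE H -> K) (y : gV H -> K) e :
  ext (fun f => x f + (y (tgt f) - y (src f))) e =
  ext x e + (y (phiV (tgt e)) - y (phiV (src e))).
Proof.
rewrite /ext; case: ifP => Se.
  have -> : phiV (src e) = phiV (tgt e).
    apply/hV; apply: connect1; apply/existsP; exists e.
    by rewrite Se /joins !eqxx.
  by rewrite subrr add0r.
have le : lift (phiE e) = e by apply: lift_phiE; rewrite Se.
rewrite /sg; case: ifP => c.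
  have [a b] := orient c; rewrite le in a b; rewrite a b; ring.
have [a b] := orient' (negbT c); rewrite le in a b; rewrite a b; ring.
Qed.

Lemma nonbridge f : ~~ bridge f -> ~~ bridge (lift f).
Proof.
rewrite /bridge !negbK => hc.
set e := lift f.
have Se : ~~ S e := (hlift f).1.
have fib v v' : phiV v = phiV v' -> connect (@adj_in G (predC1 e)) v v'.
  move/hV; apply: connect_sub => a b /existsP[e' /andP[Se' j]].
  apply: connect1; apply/existsP; exists e'; rewrite j andbT /=.
  by apply/eqP => ee; move: Se; rewrite -ee Se'.
have claim : forall u w, connect (@adj_in H (predC1 f)) u w ->
    forall v v', phiV v = u -> phiV v' = w ->
    connect (@adj_in G (predC1 e)) v v'.
  move=> u w /connectP[p]; elim: p u => [|w1 p IH] u /=.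
    by move=> _ -> v v' <- hv'; apply: fib.
  case/andP => /existsP[f' /andP[nf j1]] hp hl v v' hv hv'.
  have j2 := hjoin (hlift f').1; rewrite (hlift f').2 in j2.
  have [a [b [jab pa pb]]] : exists a b,
      [/\ joins (lift f') a b, phiV a = u & phiV b = w1].
    move: j1 j2; rewrite /joins => /orP[] /andP[/eqP h1 /eqP h2]
      /orP[] /andP[/eqP h3 /eqP h4].
    - exists (src (lift f')), (tgt (lift f')); rewrite !eqxx; split; [by rewrite ?orbT | congruence..].
    - by exists (tgt (lift f')), (src (lift f')); rewrite !eqxx; split; [by rewrite ?orbT | congruence..].
    - by exists (tgt (lift f')), (src (lift f')); rewrite !eqxx; split; [by rewrite ?orbT | congruence..].
    - by exists (src (lift f')), (tgt (lift f')); rewrite !eqxx; split; [by rewrite ?orbT | congruence..].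
  apply: connect_trans (fib v a _) _; first by rewrite hv pa.
  apply: connect_trans (IH _ hp hl b v' pb hv').
  apply: connect1; apply/existsP; exists (lift f'); rewrite jab andbT /=.
  apply/eqP => ee; move: nf => /= /eqP; apply.
  by rewrite -(hlift f').2 ee (hlift f).2.
have [c|c] := boolP (phiV (src e) == src f).
  by have [a b] := orient c; apply: (claim _ _ hc).
have [a b] := orient' c.
have sym : connect_sym (@adj_in G (predC1 e)).
  apply: sym_connect_sym => x y; apply/existsP/existsP => -[e0 /andP[h j]];
    by exists e0; rewrite h /joins orbC.
by rewrite sym; apply: (claim _ _ hc).
Qed.

Section R.
Variable R : realType.

Definition QH (Q : gE G -> gE G -> R) f f' : R :=
  sg R f * sg R f' * Q (lift f) (lift f').

Lemma sum_lift (F : gE G -> R) : (forall e, S e -> F e = 0) ->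
  \sum_e F e = \sum_f F (lift f).
Proof.
move=> hF; rewrite (bigID S) /= big1 ?add0r //.
rewrite (reindex_onto lift phiE); last by move=> e; apply: lift_phiE.
by apply: eq_bigl => f; rewrite (hlift f).1 (hlift f).2 eqxx.
Qed.

Lemma qf_eq (Q : gE G -> gE G -> R) u v : u =1 v -> qf Q u = qf Q v.
Proof. by move=> h; apply: eq_bigr => e _; apply: eq_bigr => e' _; rewrite !h. Qed.

Lemma qf_ext Q x : qf (QH Q) x = qf Q (ext x).
Proof.
rewrite /qf sum_lift; last first.
  by move=> e Se; apply: big1 => e' _; rewrite /ext Se mulr0 mul0r.
apply: eq_bigr => f _; rewrite sum_lift; last first.
  by move=> e Se; rewrite /ext Se mulr0.
apply: eq_bigr => f' _; rewrite !ext_lift /QH; ring.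
Qed.

Lemma qf_coedge (K : graph) (Q : gE K -> gE K -> R) e : qf Q (coedge R e) = Q e e.
Proof.
rewrite /qf (bigD1 e) //= [X in _ + X]big1 ?addr0; last first.
  move=> i ie; apply: big1 => j _; rewrite /coedge (negbTE ie) mulr0 mul0r //.
rewrite (bigD1 e) //= [X in _ + X]big1 ?addr0; last first.
  by move=> j je; rewrite /coedge (negbTE je) mulr0.
by rewrite /coedge eqxx mulr1 mulr1.
Qed.

Lemma intvec_ext (x : gE H -> int) : intvec R (ext x) =1 ext (intvec R x).
Proof.
move=> e; rewrite /intvec /ext; case: (S e) => //.
rewrite intrM /sg; case: ifP => _ //.
Qed.

Lemma emmR_contr Q : is_emmR Q -> is_emmR (QH Q).
Proof.
case=> hsym hinv hpos hco hint; split.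
- by move=> f f'; rewrite /QH hsym; ring.
- move=> x y; rewrite !qf_ext.
  rewrite (qf_eq _ (ext_add x y)).
  exact: (hinv (ext x) (fun v => y (phiV v))).
- move=> x hx; rewrite qf_ext; apply: hpos => y hy.
  apply: (hx (fun u => y (rep u))); apply: functional_extensionality => f.
  by apply: (lift_cob (y := y)) => e; rewrite hy.
- move=> f hf; rewrite qf_coedge /QH sg2 mul1r -qf_coedge.
  exact: hco (nonbridge hf).
- move=> x hx; rewrite qf_ext -(qf_eq _ (intvec_ext x)).
  apply: hint => y hy.
  apply: (hx (fun u => y (rep u))); apply: functional_extensionality => f.
  by apply: (lift_cob (y := y)) => e; rewrite hy.
Qed.

Lemma emmZ_contr Q : is_emmZ Q -> is_emmZ (QH Q).
Proof.
case=> hR hZ; split; first exact: emmR_contr.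
by move=> x; rewrite qf_ext -(qf_eq _ (intvec_ext x)).
Qed.

End R.
End Contr.

Theorem lemma3p9 (g : nat) (hg : (2 <= g)%N) (R : realType) (G H : graph) :
  stable_graph g G -> stable_graph g H -> contraction G H ->
  (has_Zemm R G -> has_Zemm R H) /\ (has_Remm R G -> has_Remm R H).
Proof.
move=> _ _ [Sc [phiV [phiE [[hsurjV hV hinj hsurjE hjoin] _]]]].
have [lift hlift] : exists lift : gE H -> gE G,
    forall f, ~~ Sc (lift f) /\ phiE (lift f) = f.
  apply: (@fin_all_exists _ (fun _ => gE G) (fun f e => ~~ Sc e /\ phiE e = f)) => f.
  by case: (hsurjE f) => e *; exists e.
have [rep hrep] : exists rep : gV H -> gV G, forall u, phiV (rep u) = u.
  exact: (@fin_all_exists _ (fun _ => gV G) (fun u v => phiV v = u)).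
split.
  by case=> Q hQ; exists (QH phiV lift Q); exact: (emmZ_contr hV hinj hjoin hlift hrep hQ).
by case=> Q hQ; exists (QH phiV lift Q); exact: (emmR_contr hV hinj hjoin hlift hrep hQ).
Qed.
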